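(* Let $k$ be a field and $S=k[x_1,\dots,x_n]$. Let $I\subseteq K\subseteq S$ and $J\subseteq L\subseteq S$ be monomial ideals with $\dim_k S/I<\infty$ and $\dim_k S/J<\infty$, and let $\phi\colon K/I\to L/J$ be an $S$-module isomorphism sending monomials to monomials. Let $M=(S/I\oplus S/J)/\langle (f,-\phi(f))\mid f\in K/I\rangle$, $d=\dim_k M$, let $A_i$ be the $d\times d$ matrix of multiplication by $x_i$ on $M$ in its natural monomial basis, and let $\mathcal{A}$ be the unital $k$-algebra generated by $A_1,\dots,A_n$. Let $\lambda$ (resp. $\mu$) be the $n$-dimensional Young diagram corresponding to $I$ (resp. $J$), and let $\nu$ be the skew shape associated with $K/I$. Then \[ \dim_k\mathcal{A}\le d\iff |\nu|\le|\lambda\cap\mu|. \]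
   Context: Monomials $x^a$ are identified with $a\in\mathbb{N}^n$. The $n$-dimensional Young diagram corresponding to a monomial ideal $I$ with $\dim_k S/I<\infty$ is $\{a\in\mathbb{N}^n: x^a\notin I\}$. The skew shape associated with $K/I$ is $\{a\in\mathbb{N}^n: x^a\in K,\ x^a\notin I\}$. An isomorphism $\phi$ sends monomials to monomials if it maps the class of each monomial of $K$ not in $I$ to the class of a monomial of $L$ not in $J$. *)

(* Defs.v *)
From HB Require Import structures.
From mathcomp Require Import all_boot all_order all_algebra.
From mathcomp Require Import mpoly.
Set Implicit Arguments. Unset Strict Implicit. Unset Printing Implicit Defensive.
Import GRing.Theory.
Local Open Scope ring_scope.

Section Defs.
Variables (k : fieldType) (n : nat).
Local Notation S := {mpoly k[n]}.

Definition monomial_ideal (I : S -> Prop) : Prop :=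
  exists G : 'X_{1..n} -> Prop, forall p : S,
    I p <-> exists (r : nat) (a : 'I_r -> S) (m : 'I_r -> 'X_{1..n}),
              (forall j, G (m j)) /\ p = \sum_(j < r) a j * 'X_[m j].

Definition fin_colength (I : S -> Prop) : Prop :=
  exists (r : nat) (b : 'I_r -> S), forall p : S,
    exists c : 'I_r -> k, I (p - \sum_(j < r) c j *: b j).

(* phi : S -> S represents (on representatives) an S-module isomorphism
   K/I -> L/J sending (the class of) each monomial of K not in I to
   (the class of) a monomial of L not in J. *)
Definition monomial_iso (I K J L : S -> Prop) (phi : S -> S) : Prop :=
  [/\ (forall p, K p -> L (phi p)),
      (forall p q, K p -> K q -> I (p - q) -> J (phi p - phi q)),
      (forall a p q, K p -> K q -> J (phi (a * p + q) - (a * phi p + phi q))),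
      (forall p, K p -> J (phi p) -> I p) &
      (forall q, L q -> exists2 p, K p & J (phi p - q))] /\
      (forall m, K 'X_[m] -> ~ I 'X_[m] ->
         exists m', [/\ L 'X_[m'], ~ J 'X_[m'] & J (phi 'X_[m] - 'X_[m'])]).

(* The kernel of  S x S -> M = (S/I (+) S/J) / < (f, -phi f) | f in K/I > *)
Definition Mker (I K J : S -> Prop) (phi : S -> S) (v : S * S) : Prop :=
  exists (r : nat) (a f : 'I_r -> S),
    [/\ (forall j, K (f j)),
        I (v.1 - \sum_(j < r) a j * f j) &
        J (v.2 + \sum_(j < r) a j * phi (f j))].

Definition pcomb (d : nat) (c : 'I_d -> k) (b : 'I_d -> S * S) : S * S :=
  (\sum_(j < d) c j *: (b j).1, \sum_(j < d) c j *: (b j).2).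

Definition monomial_basis (N : S * S -> Prop) (d : nat) (b : 'I_d -> S * S) : Prop :=
  [/\ (forall v : S * S, exists c : 'I_d -> k,
         N (v.1 - (pcomb c b).1, v.2 - (pcomb c b).2)),
      (forall c : 'I_d -> k, N (pcomb c b) -> forall j, c j = 0) &
      (forall j, (exists m, b j = ('X_[m], 0)) \/ (exists m, b j = (0, 'X_[m])))].

(* A i is the matrix of multiplication by x_i on M in the basis b
   (column j holds the coordinates of x_i * b j) *)
Definition mult_matrices (N : S * S -> Prop) (d : nat) (b : 'I_d -> S * S)
    (A : 'I_n -> 'M[k]_d) : Prop :=
  forall i j, N ('X_i * (b j).1 - (pcomb (fun l => A i l j) b).1,
                 'X_i * (b j).2 - (pcomb (fun l => A i l j) b).2).

Definition subalg_with (d : nat) (A : 'I_n -> 'M[k]_d) (E : {vspace 'M[k]_d}) : Prop :=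
  [/\ (1%:M : 'M[k]_d) \in E, (forall i, A i \in E) &
      (forall B C, B \in E -> C \in E -> B *m C \in E)].

Definition gen_alg (d : nat) (A : 'I_n -> 'M[k]_d) (E : {vspace 'M[k]_d}) : Prop :=
  subalg_with A E /\ (forall F, subalg_with A F -> (E <= F)%VS).

Definition card_of (P : 'X_{1..n} -> Prop) (c : nat) : Prop :=
  exists s : seq 'X_{1..n}, [/\ uniq s, size s = c & forall a, a \in s <-> P a].

Definition young_diagram (I : S -> Prop) (a : 'X_{1..n}) : Prop := ~ I 'X_[a].
Definition skew_shape (I K : S -> Prop) (a : 'X_{1..n}) : Prop := K 'X_[a] /\ ~ I 'X_[a].

End Defs.

(* Main.v *)
Require Import Defs.
From HB Require Import structures.
From mathcomp Require Import all_boot all_order all_algebra.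
From mathcomp Require Import mpoly.
From mathcomp Require Import ring zify.
From Stdlib Require Import Classical ClassicalEpsilon.
Set Implicit Arguments. Unset Strict Implicit. Unset Printing Implicit Defensive.
Import GRing.Theory.
Local Open Scope ring_scope.


Definition pb (Q : Prop) : bool := if excluded_middle_informative Q then true else false.
Lemma pbE (Q : Prop) : pb Q <-> Q.
Proof. by rewrite /pb; case: excluded_middle_informative. Qed.

Section MI.
Variables (k : fieldType) (n : nat).
Local Notation S := {mpoly k[n]}.
Variable P : S -> Prop.
Hypothesis hP : monomial_ideal P.

Lemma mi0 : P 0.
Proof.
case: hP => G HG; apply/HG; exists 0%N, (fun _ => 0), (fun _ => 0%MM).
by split; [case | rewrite big_ord0].
Qed.

Lemma miD p q : P p -> P q -> P (p + q).
Proof.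
case: hP => G HG /HG [r1 [a1 [m1 [G1 ->]]]] /HG [r2 [a2 [m2 [G2 ->]]]].
apply/HG; exists (r1 + r2)%N,
  (fun j => match split j with inl x => a1 x | inr y => a2 y end),
  (fun j => match split j with inl x => m1 x | inr y => m2 y end).
split; first by move=> j; case: (split j).
rewrite big_split_ord /=; congr (_ + _); apply: eq_bigr => i _.
  by rewrite (unsplitK (inl _ : 'I_r1 + 'I_r2)).
by rewrite (unsplitK (inr _ : 'I_r1 + 'I_r2)).
Qed.

Lemma miM a p : P p -> P (a * p).
Proof.
case: hP => G HG /HG [r [a1 [m1 [G1 ->]]]].
apply/HG; exists r, (fun j => a * a1 j), m1; split => //.
by rewrite mulr_sumr; apply: eq_bigr => i _; rewrite mulrA.
Qed.

Lemma miZ c p : P p -> P (c *: p).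
Proof. by rewrite -mul_mpolyC; apply: miM. Qed.

Lemma miN p : P p -> P (- p).
Proof. by move=> H; rewrite -scaleN1r; apply: miZ. Qed.

Lemma miB p q : P p -> P q -> P (p - q).
Proof. by move=> Hp Hq; apply: miD => //; apply: miN. Qed.

Lemma mi_sum (T : Type) (r : seq T) (Q : pred T) (F : T -> S) :
  (forall i, Q i -> P (F i)) -> P (\sum_(i <- r | Q i) F i).
Proof. by move=> H; apply: big_ind => //; [exact: mi0 | exact: miD]. Qed.

Lemma mi_X m m' : P 'X_[m] -> P 'X_[(m + m')%MM].
Proof. by move=> H; rewrite mpolyXD mulrC; apply: miM. Qed.

Lemma mi_suppP p : P p <-> (forall m, m \in msupp p -> P 'X_[m]).
Proof.
split; last first.
  move=> H; rewrite (mpolyE p) big_seq; apply: mi_sum => m Hm.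
  by apply: miZ; apply: H.
case: (hP) => G HG /HG [r [a [mm [Gm ->]]]] m.
rewrite mcoeff_msupp raddf_sum /= => nz.
case: (boolP [exists j, (a j * 'X_[mm j])@_m != 0]) => [/existsP [j Hj] | /existsPn H]; last first.
  by move: nz; rewrite big1 ?eqxx // => j _; apply/eqP; move/negPn: (H j).
move: Hj; rewrite -mcoeff_msupp (perm_mem (msuppMX _ _)) => /mapP [m' _ ->].
apply: mi_X; apply/HG; exists 1%N, (fun _ => 1), (fun _ => mm j); split => //.
by rewrite big_ord1 mul1r.
Qed.

Lemma mi_coeff p m : P p -> ~ P 'X_[m] -> p@_m = 0.
Proof.
move=> /mi_suppP H HX; apply/eqP; rewrite mcoeff_eq0; apply/negP => Hm.
by apply: HX; apply: H.
Qed.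

Lemma fin_list : fin_colength P ->
  exists s : seq 'X_{1..n}, uniq s /\ forall a, a \in s <-> ~ P 'X_[a].
Proof.
case=> r [b Hb].
pose l := flatten [seq msupp (b j) | j <- enum 'I_r].
exists (undup [seq a <- l | ~~ pb (P 'X_[a])]); split; first exact: undup_uniq.
move=> a; rewrite mem_undup mem_filter; split.
  by case/andP => /negP H _ HP; apply: H; apply/pbE.
move=> Ha; apply/andP; split; first by apply/negP => /pbE.
case: (Hb 'X_[a]) => c Hc.
have := mi_coeff Hc Ha; rewrite mcoeffB mcoeffX eqxx raddf_sum /=.
case: (boolP (a \in l)) => // Hl.
rewrite big1 ?subr0; last first.
  move=> j _.

rewrite mcoeffZ memN_msupp_eq0 ?mulr0 //; apply: contra Hl => Hj.
  by apply/flattenP; exists (msupp (b j)) => //; apply: map_f; rewrite mem_enum.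
by move/eqP; rewrite oner_eq0.
Qed.

End MI.


Section NM.
Variables (k : fieldType) (n : nat).
Local Notation S := {mpoly k[n]}.
Variables (I K J : S -> Prop) (phi : S -> S).
Hypotheses (hI : monomial_ideal I) (hK : monomial_ideal K) (hJ : monomial_ideal J).
Hypothesis hIK : forall p, I p -> K p.
Hypothesis phi_wd : forall p q, K p -> K q -> I (p - q) -> J (phi p - phi q).
Hypothesis phi_l : forall a p q, K p -> K q -> J (phi (a * p + q) - (a * phi p + phi q)).
Hypothesis phi_inj : forall p, K p -> J (phi p) -> I p.
Local Notation N := (Mker I K J phi).

Lemma phi0 : J (phi 0).
Proof.
have := phi_l 1 (mi0 hK) (mi0 hK); rewrite !mul1r !addr0 => H.
have -> : phi 0 = - (phi 0 - (phi 0 + phi 0)) by ring.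
exact: (miN hJ).
Qed.

Lemma phi_sum r (a f : 'I_r -> S) : (forall j, K (f j)) ->
  J (phi (\sum_j a j * f j) - \sum_j a j * phi (f j)).
Proof.
elim: r a f => [|r IH] a f Hf.
  by rewrite !big_ord0 subr0; exact: phi0.
rewrite !big_ord_recr /=.
set F := \sum_(i < r) a (widen_ord (leqnSn r) i) * f (widen_ord (leqnSn r) i).
set G := \sum_(i < r) a (widen_ord (leqnSn r) i) * phi (f (widen_ord (leqnSn r) i)).
have HF : K F by apply: (mi_sum hK) => i _; apply: (miM hK).
have H1 := phi_l (a ord_max) (Hf ord_max) HF.
have H2 : J (phi F - G) by apply: IH.
have -> : phi (F + a ord_max * f ord_max) - (G + a ord_max * phi (f ord_max)) =
  (phi (a ord_max * f ord_max + F) - (a ord_max * phi (f ord_max) + phi F)) + (phi F - G).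
  by rewrite [F + _]addrC; ring.
exact: (miD hJ).
Qed.

Lemma N_intro v F : K F -> I (v.1 - F) -> J (v.2 + phi F) -> N v.
Proof.
move=> HK H1 H2; exists 1%N, (fun _ => 1), (fun _ => F).
by rewrite !big_ord1 !mul1r.
Qed.

Lemma N_elim v : N v -> exists F, [/\ K F, I (v.1 - F) & J (v.2 + phi F)].
Proof.
case=> r [a [f [Hf H1 H2]]]; exists (\sum_j a j * f j); split => //.
  by apply: (mi_sum hK) => i _; apply: (miM hK).
have H3 := phi_sum a Hf.
have -> : v.2 + phi (\sum_j a j * f j) =
  (v.2 + \sum_j a j * phi (f j)) + (phi (\sum_j a j * f j) - \sum_j a j * phi (f j)) by ring.
exact: (miD hJ).
Qed.

Lemma N_IJ p q : I p -> J q -> N (p, q).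
Proof.
move=> Hp Hq; exists 0%N, (fun _ => 0), (fun _ => 0).
by rewrite !big_ord0 subr0 addr0; split => //; case.
Qed.

Lemma N_add v w : N v -> N w -> N (v.1 + w.1, v.2 + w.2).
Proof.
move=> /N_elim [F [KF H1 H2]] /N_elim [G [KG H3 H4]].
apply: (@N_intro _ (F + G)); first exact: (miD hK).
  have -> : (v.1 + w.1, v.2 + w.2).1 - (F + G) = (v.1 - F) + (w.1 - G) by rewrite /=; ring.
  exact: (miD hI).
have H5 := phi_l 1 KF KG; rewrite !mul1r in H5.
have -> : (v.1 + w.1, v.2 + w.2).2 + phi (F + G) =
   (v.2 + phi F) + (w.2 + phi G) + (phi (F + G) - (phi F + phi G)) by rewrite /=; ring.
by apply: (miD hJ) => //; apply: (miD hJ).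
Qed.

Lemma N_mul a v : N v -> N (a * v.1, a * v.2).
Proof.
case=> r [b [f [Hf H1 H2]]]; exists r, (fun j => a * b j), f; split => //=.
  have -> : a * v.1 - \sum_j a * b j * f j = a * (v.1 - \sum_j b j * f j).
    by rewrite mulrBr mulr_sumr; congr (_ - _); apply: eq_bigr => j _; rewrite mulrA.
  exact: (miM hI).
have -> : a * v.2 + \sum_j a * b j * phi (f j) = a * (v.2 + \sum_j b j * phi (f j)).
  by rewrite mulrDr mulr_sumr; congr (_ + _); apply: eq_bigr => j _; rewrite mulrA.
exact: (miM hJ).
Qed.

Lemma N_scale c v : N v -> N (c *: v.1, c *: v.2).
Proof. by rewrite -!mul_mpolyC; apply: N_mul. Qed.

Lemma N_gen f : K f -> N (f, - phi f).
Proof.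
move=> Hf; apply: (@N_intro _ f) => //=; rewrite ?subrr ?addNr; exact: (mi0 _).
Qed.

Lemma N_sum (T : Type) (r : seq T) (P : pred T) (F G : T -> S) :
  (forall i, P i -> N (F i, G i)) ->
  N (\sum_(i <- r | P i) F i, \sum_(i <- r | P i) G i).
Proof.
move=> H; elim: r => [|x r IH]; first by rewrite !big_nil; apply: N_IJ; exact: mi0.
rewrite !big_cons; case: (boolP (P x)) => // Px.
exact: (N_add (H x Px) IH).
Qed.

Lemma N_sub v w : N v -> N w -> N (v.1 - w.1, v.2 - w.2).
Proof.
move=> Hv Hw; have := N_add Hv (N_scale (-1) Hw); rewrite /= !scaleN1r //.
Qed.

Lemma N_fst g : N (g, 0) -> I g.
Proof.
case/N_elim => F [KF H1 H2]; rewrite /= add0r in H2.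
have IF := phi_inj KF H2.
by have := miD hI H1 IF; rewrite subrK.
Qed.

Lemma N_snd h : N (0, h) -> J h.
Proof.
case/N_elim => F [KF H1 H2]; rewrite /= sub0r in H1.
have IF : I F by have := miN hI H1; rewrite opprK.
have := phi_wd KF (mi0 hK); rewrite subr0 => /(_ IF).
rewrite /= => H3; have H4 : J (phi F) by have := miD hJ H3 phi0; rewrite subrK.
by have := miB hJ H2 H4; rewrite addrK.
Qed.

End NM.


Section Coords.
Variables (k : fieldType) (n : nat).
Local Notation S := {mpoly k[n]}.

Definition crow (s : seq 'X_{1..n}) (p : S) : 'rV[k]_(size s) :=
  \row_i p@_(nth 0%MM s i).
Definition clift (s : seq 'X_{1..n}) (u : 'rV[k]_(size s)) : S :=
  \sum_i u 0 i *: 'X_[nth 0%MM s i].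



Lemma coef_comb_nth (s : seq 'X_{1..n}) (c : 'I_(size s) -> k) (j : 'I_(size s)) :
  uniq s -> (\sum_i c i *: ('X_[nth 0%MM s i] : S))@_(nth 0%MM s j) = c j.
Proof.
move=> us; rewrite raddf_sum /= (bigD1 j) //= big1 ?addr0.
  by rewrite mcoeffZ mcoeffX eqxx mulr1.
move=> i ij; rewrite mcoeffZ mcoeffX nth_uniq ?ltn_ord //.
have -> : (i == j :> nat) = false by apply: negbTE.
by rewrite mulr0.
Qed.

Lemma coef_comb_out (s : seq 'X_{1..n}) (c : 'I_(size s) -> k) m :
  m \notin s -> (\sum_i c i *: ('X_[nth 0%MM s i] : S))@_m = 0.
Proof.
move=> ms; rewrite raddf_sum /= big1 // => i _.
rewrite mcoeffZ mcoeffX; case: eqP => [E|]; last by rewrite mulr0.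
by move: ms; rewrite -E mem_nth.
Qed.

Lemma crow_clift s (u : 'rV_(size s)) : uniq s -> crow s (@clift s u) = u.
Proof. by move=> us; apply/rowP => j; rewrite mxE coef_comb_nth. Qed.

Lemma crow_comb s r (c : 'I_r -> k) (p : 'I_r -> S) :
  crow s (\sum_j c j *: p j) = \sum_j c j *: crow s (p j).
Proof.
apply/rowP => j; rewrite !mxE summxE raddf_sum /=; apply: eq_bigr => i _.
by rewrite !mxE mcoeffZ.
Qed.

Variable P : S -> Prop.
Hypothesis hP : monomial_ideal P.
Variable s : seq 'X_{1..n}.
Hypothesis Hs : forall a, a \in s <-> ~ P 'X_[a].

Lemma crow_eq p q : P (p - q) <-> crow s p = crow s q.
Proof.
split.
  move=> H; apply/rowP => i; rewrite !mxE; apply/eqP; rewrite -subr_eq0 -mcoeffB.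
  by apply/eqP; apply: (mi_coeff hP H); apply/Hs; apply: mem_nth.
move=> E; apply/(mi_suppP hP) => m Hm.
case: (boolP (m \in s)) => [ms | /negP ms]; last first.
  by apply: NNPP => H; apply: ms; apply/Hs.
exfalso; move: Hm; rewrite mcoeff_msupp mcoeffB.
have ims : (index m s < size s)%N by rewrite index_mem.
have := congr1 (fun v : 'rV_(size s) => v 0 (Ordinal ims)) E.
by rewrite !mxE /= nth_index // => ->; rewrite subrr eqxx.
Qed.

End Coords.


Lemma row_mx_sum (R : nzRingType) m n1 n2 r (F : 'I_r -> 'M[R]_(m, n1)) (G : 'I_r -> 'M[R]_(m, n2)) :
  row_mx (\sum_j F j) (\sum_j G j) = \sum_j row_mx (F j) (G j).
Proof.
apply: (big_rec3 (fun a b c => row_mx a b = c)); first exact: row_mx0.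
by move=> i y1 y2 y3 _ <-; rewrite add_row_mx.
Qed.

Lemma rank_eq (R : fieldType) m t (M : 'M[R]_(m, t)) :
  (forall v : 'rV_m, v *m M = 0 -> v = 0) ->
  (forall w : 'rV_t, exists c, w = c *m M) -> m = t.
Proof.
move=> H1 H2; have /eqP Hf := inj_row_free H1.
have : row_full M.
  rewrite -sub1mx; apply/row_subP => i; case: (H2 (row i 1%:M)) => c ->.
  by apply/submxP; exists c.
by move/eqP => Hr; rewrite -Hf Hr.
Qed.

Section Dim.
Variables (k : fieldType) (n : nat).
Local Notation S := {mpoly k[n]}.
Variables (I K J : S -> Prop) (phi : S -> S).
Hypotheses (hI : monomial_ideal I) (hK : monomial_ideal K) (hJ : monomial_ideal J).
Hypothesis hIK : forall p, I p -> K p.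
Hypothesis phi_wd : forall p q, K p -> K q -> I (p - q) -> J (phi p - phi q).
Hypothesis phi_l : forall a p q, K p -> K q -> J (phi (a * p + q) - (a * phi p + phi q)).
Hypothesis phi_inj : forall p, K p -> J (phi p) -> I p.
Local Notation N := (Mker I K J phi).
Variables (sl sm : seq 'X_{1..n}).
Hypotheses (usl : uniq sl) (usm : uniq sm).
Hypothesis Hsl : forall a, a \in sl <-> ~ I 'X_[a].
Hypothesis Hsm : forall a, a \in sm <-> ~ J 'X_[a].

Definition pi (v : S * S) : 'rV[k]_(size sl + size sm) :=
  row_mx (crow sl v.1) (crow sm v.2).

Lemma pi_comb r (c : 'I_r -> k) (v : 'I_r -> S * S) :
  pi (pcomb c v) = \sum_j c j *: pi (v j).
Proof.
rewrite /pi /pcomb /= !crow_comb row_mx_sum; apply: eq_bigr => j _.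
by rewrite scale_row_mx.
Qed.

Lemma pi_add v w : pi (v.1 + w.1, v.2 + w.2) = pi v + pi w.
Proof.
rewrite /pi add_row_mx /=; congr row_mx; apply/rowP => i; by rewrite !mxE mcoeffD.
Qed.

Lemma pi_eq v w : pi v = pi w <-> I (v.1 - w.1) /\ J (v.2 - w.2).
Proof.
split.
  by case/eq_row_mx => E1 E2; split; [apply/(crow_eq hI Hsl) | apply/(crow_eq hJ Hsm)].
case=> H1 H2; rewrite /pi (proj1 (crow_eq hI Hsl _ _) H1) (proj1 (crow_eq hJ Hsm _ _) H2) //.
Qed.

Lemma pi_N v : pi v = 0 -> N v.
Proof.
have -> : (0 : 'rV_(size sl + size sm)) = pi (0, 0).
  by rewrite /pi; apply/esym; rewrite -row_mx0; congr row_mx; apply/rowP => i; rewrite !mxE mcoeff0.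
by case/pi_eq; rewrite /= !subr0 => H1 H2; exact: (N_IJ K phi H1 H2).
Qed.

Lemma pi_surj (w : 'rV_(size sl + size sm)) : exists v, pi v = w.
Proof.
exists (@clift _ _ sl (lsubmx w), @clift _ _ sm (rsubmx w)).
by rewrite /pi /= !crow_clift // hsubmxK.
Qed.

Definition sv := [seq a <- sl | pb (K 'X_[a])].
Definition nv := size sv.
Definition wv (i : 'I_nv) : S * S := ('X_[nth 0%MM sv i], - phi 'X_[nth 0%MM sv i]).

Lemma sv_uniq : uniq sv.
Proof. exact: filter_uniq. Qed.

Lemma sv_mem a : a \in sv -> ~ I 'X_[a] /\ K 'X_[a].
Proof. by rewrite mem_filter => /andP [/pbE H1 /Hsl H2]. Qed.

Lemma N_wv (e : 'I_nv -> k) : N (pcomb e wv).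
Proof.
apply: (N_sum hI hK hJ phi_l) => i _; apply: (N_scale hI hJ); apply: (N_gen phi hI hJ).
by case: (sv_mem (mem_nth 0%MM (ltn_ord i))).
Qed.

Lemma W_span u : N u -> exists e : 'I_nv -> k, pi u = pi (pcomb e wv).
Proof.
case/(N_elim hK hJ phi_l) => F [KF H1 H2].
pose e (i : 'I_nv) := F@_(nth 0%MM sv i).
pose G := \sum_i e i *: ('X_[nth 0%MM sv i] : S).
have KG : K G.
  apply: (mi_sum hK) => i _; apply: (miZ hK).
  by case: (sv_mem (mem_nth 0%MM (ltn_ord i))).
have IFG : I (F - G).
  apply/(mi_suppP hI) => m; rewrite mcoeff_msupp mcoeffB.
  case: (boolP (m \in sv)) => [msv | nmsv].
    have ims : (index m sv < nv)%N by rewrite index_mem.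
    have -> : m = nth 0%MM sv (Ordinal ims) by rewrite /= nth_index.
    by rewrite /G coef_comb_nth ?sv_uniq // subrr eqxx.
  rewrite /G coef_comb_out // subr0 -mcoeff_msupp => mF.
  have KX := (proj1 (mi_suppP hK F) KF m mF).
  apply: NNPP => nI; move: nmsv; rewrite mem_filter.
  have -> : pb (K 'X_[m]) by apply/pbE.
  by have -> : m \in sl by apply/Hsl.
exists e; apply/pi_eq; split => /=.
  have -> : u.1 - \sum_j e j *: (wv j).1 = (u.1 - F) + (F - G) by rewrite /G /=; ring.
  exact: (miD hI).
have H3 := phi_wd KF KG IFG.
have H4 := phi_sum hK hJ phi_l (fun i => (e i)%:MP) (f := fun i => 'X_[nth 0%MM sv i])
   (fun i => proj2 (sv_mem (mem_nth 0%MM (ltn_ord i)))).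
have E1 : \sum_j e j *: (wv j).2 = - \sum_j (e j)%:MP * phi 'X_[nth 0%MM sv j].
  by rewrite -sumrN; apply: eq_bigr => j _; rewrite mul_mpolyC scalerN.
have E2 : \sum_j (e j)%:MP * 'X_[nth 0%MM sv j] = G.
  by apply: eq_bigr => j _; rewrite mul_mpolyC.
rewrite E1 opprK; rewrite E2 in H4.
have -> : u.2 + \sum_j (e j)%:MP * phi 'X_[nth 0%MM sv j] =
  (u.2 + phi F) - (phi F - phi G) - (phi G - \sum_j (e j)%:MP * phi 'X_[nth 0%MM sv j]) by ring.
by apply: (miB hJ) => //; apply: (miB hJ).
Qed.


Lemma pcomb_ext r (c c' : 'I_r -> k) (v : 'I_r -> S * S) :
  (forall j, c j = c' j) -> pcomb c v = pcomb c' v.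
Proof.
by move=> H; rewrite /pcomb; congr pair; apply: eq_bigr => j _; rewrite H.
Qed.

Lemma pi0E v : pi v = 0 -> I v.1 /\ J v.2.
Proof.
have -> : (0 : 'rV_(size sl + size sm)) = pi (0, 0).
  by rewrite /pi; apply/esym; rewrite -row_mx0; congr row_mx; apply/rowP => i; rewrite !mxE mcoeff0.
by case/pi_eq; rewrite /= !subr0.
Qed.

Variables (d : nat) (b : 'I_d -> S * S).
Hypothesis hb1 : forall v, exists c, N (v.1 - (pcomb c b).1, v.2 - (pcomb c b).2).
Hypothesis hb2 : forall c, N (pcomb c b) -> forall j, c j = 0.

Definition Bm : 'M_(d, size sl + size sm) := \matrix_(j < d) pi (b j).
Definition Wm : 'M_(nv, size sl + size sm) := \matrix_(i < nv) pi (wv i).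

Lemma mulB (c : 'rV_d) : c *m Bm = pi (pcomb (fun j => c 0 j) b).
Proof. by rewrite mulmx_sum_row pi_comb; apply: eq_bigr => j _; rewrite rowK. Qed.

Lemma mulW (c : 'rV_nv) : c *m Wm = pi (pcomb (fun j => c 0 j) wv).
Proof. by rewrite mulmx_sum_row pi_comb; apply: eq_bigr => j _; rewrite rowK. Qed.

Lemma d_count : (d + nv)%N = (size sl + size sm)%N.
Proof.
apply: (@rank_eq k _ _ (col_mx Bm Wm)).
  move=> c; rewrite -[c]hsubmxK mul_row_col.
  set c1 := lsubmx c; set c2 := rsubmx c => Hc.
  have HN : N ((pcomb (fun j => c1 0 j) b).1 + (pcomb (fun j => c2 0 j) wv).1,
               (pcomb (fun j => c1 0 j) b).2 + (pcomb (fun j => c2 0 j) wv).2).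
    by apply: pi_N; rewrite pi_add -mulB -mulW.
  have Nw := N_wv (fun i => c2 0 i).
  have := N_sub hI hK hJ phi_l HN Nw; rewrite /= !addrK => Nb.
  have c1z : c1 = 0.
    by apply/rowP => j; rewrite [X in _ = X]mxE; exact: (hb2 (c := fun j => c1 0 j) Nb j).
  move: Hc; rewrite c1z mul0mx add0r mulW => /pi0E [/= H _].
  have c2z : c2 = 0.
    apply/rowP => j; rewrite [X in _ = X]mxE.
    have := mi_coeff hI H (proj1 (sv_mem (mem_nth 0%MM (ltn_ord j)))).
    rewrite coef_comb_nth //; exact: sv_uniq.
  by rewrite c2z row_mx0.
move=> w; case: (pi_surj w) => v <-; case: (hb1 v) => c Hc.
case: (W_span Hc) => e He.
exists (row_mx (\row_j c j) (\row_i e i)); rewrite mul_row_col mulB mulW.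
rewrite (pcomb_ext b (c' := c)) => [|j]; last by rewrite mxE.
rewrite (pcomb_ext wv (c' := e)) => [|j]; last by rewrite mxE.
by rewrite -He -pi_add /= !subrKC -surjective_pairing.
Qed.

End Dim.


Lemma coef_comb_inj (k : fieldType) (n : nat) r (c : 'I_r -> k) (f : 'I_r -> 'X_{1..n}) j :
  injective f -> (\sum_i c i *: ('X_[f i] : {mpoly k[n]}))@_(f j) = c j.
Proof.
move=> finj; rewrite raddf_sum /= (bigD1 j) //= big1 ?addr0.
  by rewrite mcoeffZ mcoeffX eqxx mulr1.
move=> i ij; rewrite mcoeffZ mcoeffX; case: eqP => [/finj E|]; last by rewrite mulr0.
by rewrite E eqxx in ij.
Qed.

Section Alg.
Variables (k : fieldType) (n : nat).
Local Notation S := {mpoly k[n]}.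
Variables (I K J : S -> Prop) (phi : S -> S).
Hypotheses (hI : monomial_ideal I) (hK : monomial_ideal K) (hJ : monomial_ideal J).
Hypothesis hIK : forall p, I p -> K p.
Hypothesis phi_wd : forall p q, K p -> K q -> I (p - q) -> J (phi p - phi q).
Hypothesis phi_l : forall a p q, K p -> K q -> J (phi (a * p + q) - (a * phi p + phi q)).
Hypothesis phi_inj : forall p, K p -> J (phi p) -> I p.
Local Notation N := (Mker I K J phi).
Variables (d : nat) (b : 'I_d -> S * S).
Hypothesis hb1 : forall v, exists c, N (v.1 - (pcomb c b).1, v.2 - (pcomb c b).2).
Hypothesis hb2 : forall c, N (pcomb c b) -> forall j, c j = 0.
Variable A : 'I_n -> 'M[k]_d.
Hypothesis hA : mult_matrices N b A.

Definition crd (v : S * S) : 'I_d -> k :=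
  proj1_sig (constructive_indefinite_description _ (hb1 v)).

Lemma crd_spec v : N (v.1 - (pcomb (crd v) b).1, v.2 - (pcomb (crd v) b).2).
Proof. exact: (proj2_sig (constructive_indefinite_description _ (hb1 v))). Qed.

Lemma pcombB (c c' : 'I_d -> k) :
  pcomb (fun j => c j - c' j) b = ((pcomb c b).1 - (pcomb c' b).1, (pcomb c b).2 - (pcomb c' b).2).
Proof.
by rewrite /pcomb /=; congr pair; rewrite -sumrB; apply: eq_bigr => j _; rewrite scalerBl.
Qed.

Lemma crd_uniq v c : N (v.1 - (pcomb c b).1, v.2 - (pcomb c b).2) -> forall j, crd v j = c j.
Proof.
move=> H j; have := N_sub hI hK hJ phi_l H (crd_spec v).
have E : forall x y z : S, x - y - (x - z) = z - y by move=> *; ring.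
rewrite /= !E -pcombB => /hb2 /(_ j) /eqP.
by rewrite subr_eq0 => /eqP.
Qed.

Lemma pcomb0 : pcomb (fun _ => 0) b = (0, 0).
Proof. by rewrite /pcomb; congr pair; apply: big1 => j _; rewrite scale0r. Qed.

Definition mat (p : S) : 'M[k]_d :=
  \matrix_(l, j) crd (p * (b j).1, p * (b j).2) l.

Lemma mat_spec p j : N (p * (b j).1 - (pcomb (fun l => mat p l j) b).1,
                        p * (b j).2 - (pcomb (fun l => mat p l j) b).2).
Proof.
rewrite (pcomb_ext b (c' := crd (p * (b j).1, p * (b j).2))) => [|l]; last by rewrite mxE.
exact: (crd_spec (p * (b j).1, p * (b j).2)).
Qed.

Lemma matX i : mat 'X_i = A i.
Proof. by apply/matrixP => l j; rewrite mxE; exact: (crd_uniq (v := ('X_i * (b j).1, 'X_i * (b j).2)) (hA i j)). Qed.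

Lemma mat_IJ p : I p -> J p -> mat p = 0.
Proof.
move=> Ip Jp; apply/matrixP => l j; rewrite !mxE.
apply: (crd_uniq (v := (p * (b j).1, p * (b j).2)) (c := fun _ => 0)).
rewrite pcomb0 /= !subr0.
by apply: (N_IJ K phi); rewrite mulrC; [apply: (miM hI) | apply: (miM hJ)].
Qed.

Lemma mat0 : mat 0 = 0.
Proof. by apply: mat_IJ; exact: mi0. Qed.

Lemma pcomb_lin (c : k) (u w : 'I_d -> k) :
  pcomb (fun l => c * u l + w l) b =
  (c%:MP * (pcomb u b).1 + (pcomb w b).1, c%:MP * (pcomb u b).2 + (pcomb w b).2).
Proof.
rewrite /pcomb /=; congr pair; rewrite mul_mpolyC scaler_sumr -big_split /=;
  by apply: eq_bigr => j _; rewrite scalerDl scalerA.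
Qed.

Lemma mat_lin c p q : mat (c *: p + q) = c *: mat p + mat q.
Proof.
apply/matrixP => l j; rewrite [LHS]mxE.
transitivity (c * mat p l j + mat q l j); last by rewrite [RHS]mxE [X in _ = X + _]mxE.
apply: (crd_uniq (v := ((c *: p + q) * (b j).1, (c *: p + q) * (b j).2)) (c := fun l => c * mat p l j + mat q l j)).
rewrite pcomb_lin.
have := N_add hI hK hJ phi_l (N_mul hI hJ (c%:MP) (mat_spec p j)) (mat_spec q j).
rewrite /= -mul_mpolyC.
have E : forall C p q y P Q : S, (C * p + q) * y - (C * P + Q) = C * (p * y - P) + (q * y - Q).
  by move=> *; ring.
by rewrite !E.
Qed.

Lemma matD p q : mat (p + q) = mat p + mat q.
Proof. by have := mat_lin 1 p q; rewrite !scale1r. Qed.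

Lemma matZ c p : mat (c *: p) = c *: mat p.
Proof. by have := mat_lin c p 0; rewrite !addr0 mat0 addr0. Qed.

Lemma mat_sum (T : Type) (r : seq T) (P : pred T) (F : T -> S) :
  mat (\sum_(i <- r | P i) F i) = \sum_(i <- r | P i) mat (F i).
Proof. exact: (big_morph mat matD mat0). Qed.

Lemma mat1 : mat 1 = 1%:M.
Proof.
apply/matrixP => l j; rewrite [LHS]mxE.
transitivity ((l == j)%:R : k); last by rewrite mxE.
apply: (crd_uniq (v := (1 * (b j).1, 1 * (b j).2)) (c := fun l => (l == j)%:R)).
have -> : pcomb (fun l => (l == j)%:R) b = b j.
  rewrite /pcomb; rewrite [RHS]surjective_pairing; congr pair;
  by rewrite (bigD1 j) //= eqxx scale1r big1 ?addr0 // => i /negbTE ->; rewrite scale0r.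
by rewrite !mul1r !subrr; apply: (N_IJ K phi); exact: mi0.
Qed.

Lemma comp_eq (y : S) (x : 'I_d -> S) (P Q : 'M[k]_d) j p q :
  (p * (q * y - \sum_m Q m j *: x m)) + \sum_m Q m j *: (p * x m - \sum_l P l m *: x l)
  = p * q * y - \sum_l (P *m Q) l j *: x l.
Proof.
rewrite mulrBr mulr_sumr.
under [X in _ - X + _]eq_bigr do rewrite -scalerAr.
under [X in _ + X]eq_bigr do rewrite scalerBr.
rewrite sumrB subrKA mulrA; congr (_ - _).
under eq_bigr do rewrite scaler_sumr.
rewrite exchange_big /=; apply: eq_bigr => l _.
rewrite mxE scaler_suml; apply: eq_bigr => m _.
by rewrite scalerA mulrC.
Qed.

Lemma matM p q : mat (p * q) = mat p *m mat q.
Proof.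
apply/matrixP => l j; rewrite [LHS]mxE.
apply: (crd_uniq (v := (p * q * (b j).1, p * q * (b j).2)) (c := fun l => (mat p *m mat q) l j)) => {l}.
have H1 := N_mul hI hJ p (mat_spec q j).
have H2 := N_sum hI hK hJ phi_l (index_enum 'I_d) (P := xpredT)
   (F := fun m => mat q m j *: (p * (b m).1 - (pcomb (fun l => mat p l m) b).1))
   (G := fun m => mat q m j *: (p * (b m).2 - (pcomb (fun l => mat p l m) b).2))
   (fun m _ => N_scale hI hJ (mat q m j) (mat_spec p m)).
have := N_add hI hK hJ phi_l H1 H2.
by rewrite /= !comp_eq.
Qed.

Lemma mat_ann p : mat p = 0 -> I p /\ J p.
Proof.
move=> H0.
have Hb : forall j, N (p * (b j).1, p * (b j).2).
  by move=> j; have := mat_spec p j; rewrite H0 (pcomb_ext b (c' := fun _ => 0)) ?pcomb0 /= ?subr0 // => l; rewrite mxE.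
have Hv : forall v, N (p * v.1, p * v.2).
  move=> v; case: (hb1 v) => c Hc.
  have H1 := N_mul hI hJ p Hc.
  have H2 := N_sum hI hK hJ phi_l (index_enum 'I_d) (P := xpredT)
    (F := fun m => c m *: (p * (b m).1)) (G := fun m => c m *: (p * (b m).2))
    (fun m _ => N_scale hI hJ (c m) (Hb m)).
  have := N_add hI hK hJ phi_l H1 H2.
  rewrite /= /pcomb /= !mulrBr !mulr_sumr.
  have E2 : forall (c : 'I_d -> k) (x : 'I_d -> S),
      \sum_i p * (c i *: x i) = \sum_i c i *: (p * x i).
    move=> c' x; apply: eq_bigr => i _.
    by rewrite -!mul_mpolyC mulrA [p * _]mulrC mulrA.
  by rewrite !E2 !subrK.
split.
  apply: (N_fst hI hK hJ phi_l phi_inj).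
  by have := Hv (1, 0); rewrite /= mulr1 mulr0.
apply: (N_snd hI hK hJ phi_wd phi_l).
by have := Hv (0, 1); rewrite /= mulr1 mulr0.
Qed.


Variables (sl sm : seq 'X_{1..n}).
Hypotheses (usl : uniq sl) (usm : uniq sm).
Hypothesis Hsl : forall a, a \in sl <-> ~ I 'X_[a].
Hypothesis Hsm : forall a, a \in sm <-> ~ J 'X_[a].

Definition U := sl ++ [seq a <- sm | a \notin sl].
Definition Xs := [seq mat 'X_[a] | a <- U].
Definition E : {vspace 'M[k]_d} := <<Xs>>%VS.

Lemma U_uniq : uniq U.
Proof.
rewrite cat_uniq usl filter_uniq // andbT; apply/hasPn => a.
by rewrite mem_filter => /andP [].
Qed.

Lemma U_notin a : a \notin U -> I 'X_[a] /\ J 'X_[a].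
Proof.
rewrite mem_cat negb_or mem_filter => /andP [nl].
rewrite nl /= => nm; split; apply: NNPP.
  by move=> H; move/negP: nl; apply; apply/Hsl.
by move=> H; move/negP: nm; apply; apply/Hsm.
Qed.

Lemma matE p : mat p \in E.
Proof.
rewrite (mpolyE p) mat_sum; apply: memv_suml => m _; rewrite matZ; apply: memvZ.
case: (boolP (m \in U)) => mU; first by apply: memv_span; apply: map_f.
by case: (U_notin mU) => H1 H2; rewrite mat_IJ ?mem0v.
Qed.

Lemma E_mat B : B \in E -> exists p, B = mat p.
Proof.
move=> HB; have -> := coord_span (X := in_tuple Xs) HB.
exists (\sum_i coord (in_tuple Xs) i B *: 'X_[nth 0%MM U i]).
rewrite mat_sum; apply: eq_bigr => i _; rewrite matZ (nth_map 0%MM) //.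
by rewrite -(size_map (fun a => mat 'X_[a])).
Qed.

Lemma mat_in_sub F p : subalg_with A F -> mat p \in F.
Proof.
case=> F1 FA FM.
have HX : forall m, mat 'X_[m] \in F.
  move=> m; rewrite mpolyXE_id.
  apply: (big_ind (fun q => mat q \in F)); first by rewrite mat1.
    by move=> x y Hx Hy; rewrite matM; apply: FM.
  move=> i _; elim: (m i) => [|e IH]; first by rewrite expr0 mat1.
  by rewrite exprS matM matX; apply: FM.
rewrite (mpolyE p) mat_sum; apply: memv_suml => m _; rewrite matZ; apply: memvZ.
exact: HX.
Qed.

Lemma E_gen : gen_alg A E.
Proof.
split.
  split; first by rewrite -mat1 matE.
    by move=> i; rewrite -matX matE.
  move=> B C /E_mat [p ->] /E_mat [q ->]; rewrite -matM; exact: matE.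
move=> F HF; apply/span_subvP => B /mapP [a _ ->]; exact: mat_in_sub.
Qed.

Lemma E_dim : \dim E = size U.
Proof.
have : free (in_tuple Xs).
  apply/freeP => c Hc i.
  have Hi : (i < size U)%N by rewrite -(size_map (fun a => mat 'X_[a])).
  have : mat (\sum_i c i *: 'X_[nth 0%MM U i]) = 0.
    rewrite mat_sum; rewrite -[RHS]Hc; apply: eq_bigr => j _; rewrite matZ (nth_map 0%MM) //.
    by rewrite -(size_map (fun a => mat 'X_[a])).
  case/mat_ann => HI HJ.
  have finj : injective (fun j : 'I_(size Xs) => nth 0%MM U j).
    move=> j1 j2 /eqP; rewrite nth_uniq ?U_uniq //; first by move/eqP/val_inj.
      by rewrite -(size_map (fun a => mat 'X_[a])).
    by rewrite -(size_map (fun a => mat 'X_[a])).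
  have := coef_comb_inj c i finj.
  have : nth 0%MM U i \in U by apply: mem_nth.
  rewrite mem_cat mem_filter => /orP [/Hsl nI | /andP [_ /Hsm nJ]].
    by rewrite (mi_coeff hI HI nI).
  by rewrite (mi_coeff hJ HJ nJ).
by move/eqP => ->; rewrite size_map.
Qed.

End Alg.

Unset Implicit Arguments.


Lemma arith_aux (d v l m x y : nat) : (d + v)%N = (l + m)%N -> (y + x)%N = m ->
  (l + x <= d)%N <-> (v <= y)%N.
Proof. move=> *; split => H; lia. Qed.

Theorem proposition2p1 (k : fieldType) (n : nat)
    (I K J L : {mpoly k[n]} -> Prop)
    (hI : monomial_ideal I) (hK : monomial_ideal K)
    (hJ : monomial_ideal J) (hL : monomial_ideal L)
    (hIK : forall p, I p -> K p) (hJL : forall p, J p -> L p)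
    (fI : fin_colength I) (fJ : fin_colength J)
    (phi : {mpoly k[n]} -> {mpoly k[n]}) (hphi : monomial_iso I K J L phi)
    (d : nat) (b : 'I_d -> {mpoly k[n]} * {mpoly k[n]})
    (hb : monomial_basis (Mker I K J phi) b)
    (A : 'I_n -> 'M[k]_d) (hA : mult_matrices (Mker I K J phi) b A) :
  exists (E : {vspace 'M[k]_d}) (nu lm : nat),
    [/\ gen_alg A E,
        card_of (skew_shape I K) nu,
        card_of (fun a => young_diagram I a /\ young_diagram J a) lm &
        ((dimv E <= d)%N <-> (nu <= lm)%N)].
Proof.
case: hphi => [[h1 phi_wd phi_l phi_inj h5] h6].
case: hb => hb1 hb2 hb3.
case: (fin_list hI fI) => sl [usl Hsl].
case: (fin_list hJ fJ) => sm [usm Hsm].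
exists (E hb1 sl sm), (nv K sl), (size [seq a <- sm | a \in sl]).
have HE := E_dim hI hK hJ phi_wd phi_l phi_inj hb1 hb2 usl usm Hsl Hsm.
have Hd := d_count hI hK hJ phi_wd phi_l usl usm Hsl Hsm hb1 hb2.
split.
- exact: (E_gen hI hK hJ phi_l hb1 hb2 hA Hsl Hsm).
- exists (sv K sl); split => //; first exact: filter_uniq.
  move=> a; rewrite mem_filter; split.
    by case/andP => /pbE H1 /Hsl H2.
  by case=> H1 H2; apply/andP; split; [apply/pbE | apply/Hsl].
- exists [seq a <- sm | a \in sl]; split => //; first exact: filter_uniq.
  move=> a; rewrite mem_filter; split.
    by case/andP => /Hsl H1 /Hsm H2.
  by case=> H1 H2; apply/andP; split; [apply/Hsl | apply/Hsm].
- rewrite /nv in Hd *; rewrite HE; move: (size (sv K sl)) Hd => v Hd.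
  rewrite /U size_cat !size_filter.
  have := count_predC (mem sl) sm.
  set x := count _ sm; set y := count _ sm => Hxy.
  exact: (arith_aux _ _ _ _ _ _ Hd Hxy).
Qed.
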